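(* Let $n\ge 2$ and let $\overrightarrow{K_{1,n}}$ be an orientation of the star $K_{1,n}$. Then $\overrightarrow{K_{1,n}}$ is $\{0,1,2\}$-antimagic if and only if its center is neither a source nor a sink.
   Context: An oriented graph $\overrightarrow{G}$ is a directed graph obtained from a simple undirected graph by giving each edge one direction. For vertices $u,v$, $d(u,v)$ is the length of a shortest directed path from $u$ to $v$ ($d(u,u)=0$, and $d(u,v)=\infty$ if there is no such path). Let $\partial=\max\{d(u,v)<\infty : u,v\in V(\overrightarrow{G})\}$. A distance set is a nonempty $D\subseteq\{0,1,\dots,\partial\}$. The $D$-neighborhood of $u$ is $N_D(u)=\{v : d(u,v)\in D\}$. For a bijection $f:V(\overrightarrow{G})\to\{1,\dots,|V(\overrightarrow{G})|\}$, the $D$-weight of $u$ is $\omega_D(u)=\sum_{v\in N_D(u)} f(v)$. $\overrightarrow{G}$ is $D$-antimagic if $D\subseteq\{0,\dots,\partial\}$ (so $\{0,1,2\}$-antimagic requires $\partial\ge 2$) and there is such a bijection $f$ with all $D$-weights pairwise distinct. The center of $\overrightarrow{K_{1,n}}$ is its vertex of degree $n$; a source is a vertex of in-degree $0$ and a sink a vertex of out-degree $0$. *)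

(* Defs.v *)
From mathcomp Require Import all_boot.
Set Implicit Arguments. Unset Strict Implicit. Unset Printing Implicit Defensive.

Section Digraph.
Variables (T : finType) (arc : rel T).

Definition walk_len (k : nat) (u v : T) : Prop :=
  exists s : seq T, [/\ size s = k, path arc u s & last u s = v].

Definition dist_is (u v : T) (k : nat) : Prop :=
  walk_len k u v /\ forall j, j < k -> ~ walk_len j u v.

(* k <= \partial, where \partial = max of finite distances *)
Definition le_diam (k : nat) : Prop :=
  exists u v j, dist_is u v j /\ k <= j.

Definition NbD (D : pred nat) (u v : T) : Prop :=
  exists2 k, D k & dist_is u v k.

Definition labeling (f : T -> nat) : Prop :=
  injective f /\ forall x, 0 < f x <= #|T|.

Definition is_weight (D : pred nat) (f : T -> nat) (u : T) (w : nat) : Prop :=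
  exists A : {set T}, (forall v, v \in A <-> NbD D u v) /\ w = \sum_(v in A) f v.

Definition antimagic (D : pred nat) : Prop :=
  (exists k, D k) /\ (forall k, D k -> le_diam k) /\
  exists f, labeling f /\
    forall u u' w w', is_weight D f u w -> is_weight D f u' w' -> w = w' -> u = u'.

Definition source (x : T) : Prop := forall y, ~~ arc y x.
Definition sink (x : T) : Prop := forall y, ~~ arc x y.
End Digraph.

(* Orientation of the star K_{1,n}: vertex None is the center, Some i the
   leaves; o i = true means the edge is oriented center -> leaf i. *)
Definition star_arc (n : nat) (o : 'I_n -> bool) : rel (option 'I_n) :=
  fun x y => match x, y with
             | None, Some i => o i
             | Some i, None => ~~ o i
             | _, _ => false
             end.

Definition D012 : pred nat := fun k => k <= 2.

(* Main.v *)
Require Import Defs.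
From Stdlib Require Import Classical.
From mathcomp Require Import all_boot.
From mathcomp Require Import zify.

Set Implicit Arguments. Unset Strict Implicit. Unset Printing Implicit Defensive.

Lemma walk_dist (T : finType) (arc : rel T) u v k :
  walk_len arc k u v -> exists2 j, j <= k & dist_is arc u v j.
Proof.
elim: k {-2}k (leqnn k) => [|K IH] k hk hw;
 (case: (classic (exists j, j < k /\ walk_len arc j u v)) => [[j [hj hwj]]|hno];
  [| by exists k => //; split => // j hj hwj; apply: hno; exists j]).
- by exfalso; lia.
- have [j' hj' hd] := IH j (ltac:(lia)) hwj.
  by exists j' => //; lia.
Qed.

Definition Rb n (o : 'I_n -> bool) (u v : option 'I_n) : bool :=
  (u == v) || star_arc o u v || [exists x, star_arc o u x && star_arc o x v].

Lemma walk012 n (o : 'I_n -> bool) u v :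
  (exists k, k <= 2 /\ walk_len (star_arc o) k u v) <-> Rb o u v.
Proof.
split.
- case=> k [hk [s [hs hp hl]]].
  case: s hs hp hl => [|x [|y [|z s]]] /= hs hp hl; rewrite /Rb.
  + by rewrite hl eqxx.
  + by move: hp; rewrite andbT hl => ->; rewrite orbT.
  + apply/orP; right; apply/existsP; exists x.
    by move: hp; rewrite andbT hl.
  + by exfalso; rewrite -hs in hk.
- rewrite /Rb => /orP [/orP [/eqP->|h]|/existsP [x /andP [h1 h2]]].
  + by exists 0; split => //; exists [::].
  + by exists 1; split => //; exists [:: v]; rewrite /= h.
  + by exists 2; split => //; exists [:: x; v]; rewrite /= h1 h2.
Qed.

Lemma NbD_Rb n (o : 'I_n -> bool) u v : NbD (star_arc o) D012 u v <-> Rb o u v.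
Proof.
split.
- case=> k hk [hw _]; apply/walk012; by exists k.
- move/walk012 => [k [hk hw]].
  have [j hj hd] := walk_dist hw.
  exists j => //; rewrite /D012; exact: leq_trans hj hk.
Qed.

Definition Nset n (o : 'I_n -> bool) u := [set v | Rb o u v].

Lemma weightE n (o : 'I_n -> bool) f u w :
  is_weight (star_arc o) D012 f u w -> w = \sum_(v in Nset o u) f v.
Proof.
case=> A [hA ->].
have -> : A = Nset o u.
  apply/setP => v; rewrite inE; apply/idP/idP => h.
  - by apply/NbD_Rb/hA.
  - by apply/hA/NbD_Rb.
by [].
Qed.

Lemma mem_center n (o : 'I_n -> bool) v :
  (v \in Nset o None) = (v == None) || star_arc o None v.
Proof.
rewrite inE /Rb; case: v => [k|] /=; last by [].
case: (o k) => //=.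
apply/existsP => [[x]]; case: x => [m|] //=; by rewrite andbF.
Qed.

Lemma Nset_out n (o : 'I_n -> bool) i : o i -> Nset o (Some i) = [set Some i].
Proof.
move=> hi; apply/setP => v; rewrite !inE /Rb.
have -> : [exists x, star_arc o (Some i) x && star_arc o x v] = false.
  apply/existsP => [[x]]; case: x => [m|] //=; by rewrite hi.
case: v => [k|] /=; first by rewrite !orbF.
by rewrite hi.
Qed.

Lemma Nset_in n (o : 'I_n -> bool) j : ~~ o j ->
  Nset o (Some j) = Some j |: Nset o None.
Proof.
move=> hj; apply/setP => v; rewrite in_setU1 mem_center inE /Rb.
case: v => [k|] /=; last by rewrite hj.
rewrite [Some j == _]eq_sym orbF; apply/idP/idP.
- move=> /orP [->//|/existsP [x /andP [h1 h2]]].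
  by case: x h1 h2 => [m|] //= _ ->; rewrite orbT.
- move=> /orP [->//|h]; apply/orP; right; apply/existsP; exists None.
  by rewrite /= hj h.
Qed.

Lemma sum_proper (T : finType) (f : T -> nat) (A B : {set T}) x :
  (forall y, 0 < f y) -> A \subset B -> x \in B -> x \notin A ->
  \sum_(y in A) f y < \sum_(y in B) f y.
Proof.
move=> fpos sAB xB xA.
rewrite (bigD1 x xB) /=.
apply: (@leq_trans (f x + \sum_(y in A) f y)).
  by rewrite -[X in X < _]add0n ltn_add2r fpos.
rewrite leq_add2l big_mkcond [X in _ <= X]big_mkcond /=.
apply: leq_sum => y _; case: ifP => hy //.
have -> : (y \in B) && (y != x) by rewrite (subsetP sAB _ hy); apply/eqP => e; subst; rewrite hy in xA.
by [].
Qed.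

Lemma out_lt_center n (o : 'I_n -> bool) (f : option 'I_n -> nat) i :
  (forall y, 0 < f y) -> o i -> f (Some i) < \sum_(v in Nset o None) f v.
Proof.
move=> fpos hi.
have <- : \sum_(v in [set Some i]) f v = f (Some i) by rewrite big_set1.
apply: (sum_proper (x := None)) => //.
- by rewrite sub1set mem_center /= hi.
- by rewrite mem_center.
- by rewrite inE.
Qed.

Lemma W_inj n (o : 'I_n -> bool) (f : option 'I_n -> nat) u u' :
  labeling f ->
  \sum_(v in Nset o u) f v = \sum_(v in Nset o u') f v -> u = u'.
Proof.
move=> [finj fb].
have fpos : forall y, 0 < f y by move=> y; case/andP: (fb y).
have Win : forall j, ~~ o j ->
    \sum_(v in Nset o (Some j)) f v = f (Some j) + \sum_(v in Nset o None) f v.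
  move=> j hj; rewrite Nset_in // big_setU1 //= mem_center /=.
  by rewrite (negbTE hj).
have Wout : forall i, o i -> \sum_(v in Nset o (Some i)) f v = f (Some i).
  by move=> i hi; rewrite Nset_out // big_set1.
case: u => [i|]; case: u' => [i'|] //.
- case hi: (o i); case hi': (o i').
  + by rewrite (Wout i) // (Wout i') // => /finj.
  + rewrite (Wout i) // (Win i') ?hi' // => e; exfalso.
    have := out_lt_center fpos hi; lia.
  + rewrite (Win i) ?hi // (Wout i') // => e; exfalso.
    have := out_lt_center fpos hi'; lia.
  + by rewrite (Win i) ?hi // (Win i') ?hi' // => /addIn /finj.
- case hi: (o i).
  + rewrite (Wout i) // => e; exfalso.
    have := out_lt_center fpos hi; lia.
  + rewrite (Win i) ?hi // => e; exfalso; have := fpos (Some i); lia.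
- case hi': (o i').
  + rewrite (Wout i') // => e; exfalso.
    have := out_lt_center fpos hi'; lia.
  + rewrite (Win i') ?hi' // => e; exfalso; have := fpos (Some i'); lia.
Qed.

Lemma two_arcs n (o : 'I_n -> bool) a b c :
  star_arc o a b -> star_arc o b c ->
  (exists y, star_arc o y None) /\ (exists y, star_arc o None y).
Proof.
case: b => [k|].
- case: a => [//|]; case: c => [//|] /= h1 h2.
  by split; [exists (Some k) | exists (Some k)]; rewrite /=.
- move=> h1 h2; split; [by exists a | by exists c].
Qed.

Theorem mainTheorem6 (n : nat) (hn : 2 <= n) (o : 'I_n -> bool) :
  antimagic (star_arc o) D012 <->
  (~ source (star_arc o) None /\ ~ sink (star_arc o) None).
Proof.
split.
- case=> _ [hd _].
  have [u [v [j [[[s [hs hp hl]] _] h2]]]] := hd 2 (isT : D012 2).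
  case: s hs hp hl => [|x [|y s]] /= hs; try by (exfalso; rewrite -hs in h2).
  move=> /andP [h1 /andP [h2' _]] _.
  have [[y1 e1] [y2 e2]] := two_arcs h1 h2'.
  by split => H; [move: (H y1); rewrite e1 | move: (H y2); rewrite e2].
- move=> [nso nsi].
  have [j hj] : exists j, ~~ o j.
    case: (boolP [exists y, star_arc o y None]) => [/existsP [[k|] //= hk]|/existsP hno].
      by exists k.
    by exfalso; apply: nso => y; apply/negP => h; apply: hno; exists y.
  have [i hi] : exists i, o i.
    case: (boolP [exists y, star_arc o None y]) => [/existsP [[k|] //= hk]|/existsP hno].
      by exists k.
    by exfalso; apply: nsi => y; apply/negP => h; apply: hno; exists y.
  split; first by exists 0.
  split.
    move=> k hk; exists (Some j), (Some i), 2; split; last by [].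
    split.
      by exists [:: None; Some i]; rewrite /= hj hi.
    move=> m hm [s [hs hp hl]].
    case: s hs hp hl => [|x [|y s]] /= hs; try (by rewrite -hs in hm).
    + by move=> _ [e]; rewrite e hi in hj.
    + by case: x => [x|] //= _ ->.
  exists (fun v => (enum_rank v).+1); split.
    split.
      by move=> x y [] /val_inj /enum_rank_inj.
    by move=> x; rewrite /= ltn_ord.
  move=> u u' w w' hw hw' e.
  apply: (W_inj (o := o) (f := fun v => (enum_rank v).+1)).
    split; first by move=> x y [] /val_inj /enum_rank_inj.
    by move=> x; rewrite /= ltn_ord.
  by rewrite -(weightE hw) -(weightE hw') e.
Qed.
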